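(* Let $G=(V,E)$ be a finite simple undirected graph and let $S$ be a total clique covering of $G$. Then there exists a coding sequence $\sigma$ of $G$ such that $S=S_\sigma$.
   Context: All graphs are finite, simple and undirected. A clique is a set of pairwise adjacent vertices; a set $S$ of cliques of $G$ is a total clique covering if every vertex lies in some member of $S$ and every edge has both endpoints in some member of $S$. For a finite sequence $\sigma=(a_1,\ldots,a_m)$ of positive integers, $G[\sigma]$ is the graph with vertices $v_1,\ldots,v_m$ ($a_i$ the label of $v_i$) where $v_iv_j$ is an edge iff $i\ne j$ and $\gcd(a_i,a_j)>1$. A coding sequence of a graph $G$ with $s\ge0$ isolated vertices: if $G$ has one vertex, $\sigma=(1)$; otherwise, with $G_1$ the graph obtained by deleting isolated vertices, take a non-decreasing finite sequence $\sigma_1$ of square-free integers $>1$ with $G_1\cong G[\sigma_1]$ and prefix it with $s$ entries equal to $1$; then $G\cong G[\sigma]$ with the isolated vertices labelled $1$. $\lambda(\sigma)$ is the lcm of the entries of $\sigma$ greater than $1$. Given a coding sequence $\sigma=(\lambda_1,\ldots,\lambda_m)$ of $G$ with vertices $v_i$ labelled $\lambda_i$, $s$ isolated vertices $v_1,\ldots,v_s$, and $p_1,\ldots,p_k$ the distinct prime factors of $\lambda(\sigma)$, the total clique covering corresponding to $\sigma$ is $S_\sigma=\{\{v_1\},\ldots,\{v_s\}\}\cup\{\{v_i : p_j\mid\lambda_i\} : j=1,\ldots,k\}$. *)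

(* Defs.v *)
From mathcomp Require Import all_boot.
Set Implicit Arguments. Unset Strict Implicit. Unset Printing Implicit Defensive.

Definition simple_graph (T : finType) (e : rel T) : Prop :=
  symmetric e /\ irreflexive e.

Definition isolated (T : finType) (e : rel T) (x : T) : bool :=
  [forall y, ~~ e x y].

Definition is_clique (T : finType) (e : rel T) (C : {set T}) : Prop :=
  C != set0 /\ (forall x y, x \in C -> y \in C -> x != y -> e x y).

Definition total_clique_covering (T : finType) (e : rel T)
    (S : {set {set T}}) : Prop :=
  [/\ forall C, C \in S -> is_clique e C,
      forall x, exists2 C, C \in S & x \in C
    & forall x y, e x y -> exists2 C, C \in S & (x \in C) && (y \in C)].

Definition squarefree (n : nat) : Prop :=
  forall p, prime p -> ~~ (p * p %| n).

(* Label of the i-th vertex v_(i+1) of G[sigma]. *)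
Definition lab (sigma : seq nat) (i : nat) : nat := nth 0 sigma i.

(* sigma is a coding sequence of the graph (T, e), and f : T -> indices
   is an isomorphism from G onto G[sigma] (vertex v_(i+1) <-> index i). *)
Definition coding_seq (T : finType) (e : rel T) (sigma : seq nat)
    (f : T -> nat) : Prop :=
  let s := #|[set x | isolated e x]| in
  [/\ size sigma = #|T|,
      injective f,
      (forall x, f x < size sigma)
    & (forall x y, x != y ->
         e x y = (1 < gcdn (lab sigma (f x)) (lab sigma (f y))))] /\
  [/\ (forall i, i < s -> lab sigma i = 1),
      (forall i, s <= i < size sigma ->
         1 < lab sigma i /\ squarefree (lab sigma i)),
      sorted leq (drop s sigma)
    & (#|T| = 1 -> sigma = [:: 1])].

Definition lambda (sigma : seq nat) : nat :=
  \big[lcmn/1]_(a <- sigma | 1 < a) a.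

(* The total clique covering corresponding to sigma, transported to G
   along the isomorphism f. *)
Definition S_sigma (T : finType) (e : rel T) (sigma : seq nat)
    (f : T -> nat) : {set {set T}} :=
  [set [set v] | v in [set x | isolated e x]] :|:
  [set:: map (fun p => [set x | p %| lab sigma (f x)]) (primes (lambda sigma))].

(* Main.v *)
Require Import Defs.
From mathcomp Require Import all_boot.
From mathcomp Require Import zify.

Lemma dvd_prod_prime (I : finType) (Q : pred I) (P : I -> nat) p :
  (forall i, prime (P i)) -> prime p -> p %| \prod_(i | Q i) P i ->
  exists2 i, Q i & p = P i.
Proof.
move=> hP hp; elim/big_rec: _ => [|i r Qi IH].
  by rewrite dvdn1 => /eqP p1; rewrite p1 in hp.
rewrite Euclid_dvdM // => /orP[|/IH //].
by rewrite dvdn_prime2 // => /eqP ->; exists i.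
Qed.

Lemma dvd_biglcm_prime (s : seq nat) (Q : pred nat) p : prime p ->
  p %| \big[lcmn/1]_(a <- s | Q a) a -> exists2 a, (a \in s) && Q a & p %| a.
Proof.
move=> hp; elim: s => [|a s IH]; first by rewrite big_nil dvdn1 => /eqP p1; rewrite p1 in hp.
rewrite big_cons; case: ifP => Qa.
  move=> h; have : p %| a * \big[lcmn/1]_(b <- s | Q b) b.
    apply: dvdn_trans h _; by rewrite dvdn_lcm dvdn_mulr ?dvdn_mull.
  rewrite Euclid_dvdM // => /orP[pa|/IH [b /andP[bs Qb] pb]].
    by exists a; rewrite ?inE ?eqxx ?Qa.
  by exists b; rewrite // inE bs orbT.
by move/IH=> [b /andP[bs Qb] pb]; exists b; rewrite // inE bs orbT.
Qed.

Lemma dvd_biglcm (s : seq nat) (Q : pred nat) a : a \in s -> Q a ->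
  a %| \big[lcmn/1]_(b <- s | Q b) b.
Proof.
elim: s => [//|b s IH]; rewrite inE big_cons => /orP[/eqP <- Qa|as_ Qa].
  by rewrite Qa dvdn_lcml.
case: ifP => _; last exact: IH.
by apply: dvdn_trans (IH as_ Qa) _; rewrite dvdn_lcmr.
Qed.

Definition nextp m := s2val (prime_above m).
Definition qp k := iter k.+1 nextp 0.

Lemma qp_prime k : prime (qp k).
Proof. by rewrite /qp iterS /nextp; case: (prime_above _). Qed.

Lemma qp_lt k : qp k < qp k.+1.
Proof. by rewrite /qp [iter k.+2 _ _]iterS /nextp; case: (prime_above _). Qed.

Lemma qp_inj : injective qp.
Proof.
have hm := homo_ltn ltn_trans qp_lt.
move=> i j eq; case: (ltngtP i j) => // /hm; by rewrite eq ltnn.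
Qed.

Theorem lemma2 (T : finType) (e : rel T) (S : {set {set T}}) :
  simple_graph e -> total_clique_covering e S ->
  exists (sigma : seq nat) (f : T -> nat),
    coding_seq e sigma f /\ S = S_sigma e sigma f.
Proof.
move=> [esym eirr] [Scl Scov Sedge].
set iso := [set x | isolated e x].
set isoS := [set [set v] | v in iso].
set S' := S :\: isoS.
pose P (C : {set T}) := qp (enum_rank C).
have Pp C : prime (P C) by apply: qp_prime.
have Pinj : injective P by move=> C D /qp_inj/ord_inj/enum_rank_inj.
pose L x := \prod_(C in S' | x \in C) P C.
have Ldvd p x : prime p -> p %| L x -> exists2 C, (C \in S') && (x \in C) & p = P C.
  by move=> hp; apply: dvd_prod_prime.
have dvdL C x : C \in S' -> x \in C -> P C %| L x.
  by move=> CS xC; rewrite /L (bigD1 C) ?CS ?xC //= dvdn_mulr.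
have Lgt0 x : 0 < L x by apply: prodn_gt0 => C; apply: prime_gt0.
have single v C : v \in iso -> C \in S -> v \in C -> C = [set v].
  move=> vi CS vC; apply/setP=> y; rewrite inE; apply/idP/eqP => [yC|->//].
  case: (eqVneq y v) => // nyv.
  move: vi; rewrite inE => /forallP/(_ y).
  by rewrite ((Scl C CS).2 v y vC yC) // eq_sym nyv.
have inS' x y C : e x y -> C \in S -> x \in C -> y \in C -> C \in S'.
  move=> exy CS xC yC; rewrite inE CS andbT; apply/imsetP => [[v _ Cv]].
  move: xC yC; rewrite Cv !inE => /eqP xv /eqP yv.
  by move: exy; rewrite xv yv eirr.
have edge x y : x != y -> e x y = (1 < gcdn (L x) (L y)).
  move=> nxy; apply/idP/idP.
  - move=> exy; have [C CS /andP[xC yC]] := Sedge x y exy.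
    have CS' := inS' x y C exy CS xC yC.
    apply: leq_trans (prime_gt1 (Pp C)) _; apply: dvdn_leq.
      by rewrite gcdn_gt0 Lgt0.
    by rewrite dvdn_gcd !dvdL.
  - move=> g1; have pp := pdiv_prime g1.
    have [Cx /andP[CxS xC] ex] := Ldvd _ x pp (dvdn_trans (pdiv_dvd _) (dvdn_gcdl _ _)).
    have [Cy /andP[CyS yC] ey] := Ldvd _ y pp (dvdn_trans (pdiv_dvd _) (dvdn_gcdr _ _)).
    have eC : Cx = Cy by apply: Pinj; rewrite -ex -ey.
    move: CxS; rewrite inE => /andP[_ CS].
    by apply: (Scl Cx CS).2 => //; rewrite eC.
have Liso x : x \in iso -> L x = 1.
  move=> xi; apply: big1 => C /andP[]; rewrite inE => /andP[nC CS] xC.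
  by move: nC; rewrite (single x C xi CS xC) imset_f.
have Lniso x : x \notin iso -> 1 < L x.
  rewrite inE /isolated negb_forall => /existsP [y]; rewrite negbK => exy.
  have [C CS /andP[xC yC]] := Sedge x y exy.
  have CS' := inS' x y C exy CS xC yC.
  exact: leq_trans (prime_gt1 (Pp C)) (dvdn_leq (Lgt0 x) (dvdL C x CS' xC)).
have Lsq x : squarefree (L x).
  move=> p hp; apply/negP => h.
  have [C /andP[CS xC] eC] := Ldvd p x hp (dvdn_trans (dvdn_mulr p (dvdnn p)) h); subst p.
  move: h; rewrite /L (bigD1 C) ?CS ?xC //= dvdn_pmul2l ?prime_gt0 // => h.
  have [D /andP[/andP[_ _] nDC] eD] := dvd_prod_prime _ _ _ _ Pp (Pp C) h.
  by move: nDC; rewrite (Pinj _ _ eD) eqxx.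
have setPC C : C \in S' -> [set y | P C %| L y] = C.
  move=> CS; apply/setP=> y; rewrite inE; apply/idP/idP => [h|]; last exact: dvdL.
  by have [D /andP[_ yD] /Pinj ->] := Ldvd _ y (Pp C) h.
pose vs := enum iso ++ sort (relpre L leq) (enum (~: iso)).
pose sigma := map L vs.
pose f x := index x vs.
have invs x : x \in vs.
  by rewrite mem_cat mem_sort !mem_enum in_setC orbN.
have labf x : lab sigma (f x) = L x.
  by rewrite /lab (nth_map x) ?index_mem // nth_index.
have sizes : size sigma = #|T|.
  by rewrite size_map size_cat size_sort -!cardE cardsC.
have sigmaE : sigma = nseq #|iso| 1 ++ sort leq (map L (enum (~: iso))).
  rewrite /sigma map_cat sort_map; congr (_ ++ _).
  rewrite cardE -(size_map L); apply/all_pred1P/allP => a /mapP [x].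
  by rewrite mem_enum => xi ->; rewrite /= Liso.
exists sigma, f; split; first split; first split.
- exact: sizes.
- by move=> x y /(congr1 (nth x vs)); rewrite !nth_index.
- by move=> x; rewrite size_map index_mem.
- by move=> x y /edge; rewrite !labf.
- split.
  + by move=> i hi; rewrite /lab sigmaE nth_cat size_nseq hi nth_nseq hi.
  + move=> i; rewrite -/iso => /andP[hs hi].
    have hi' : i - #|iso| < size (sort leq (map L (enum (~: iso)))).
      by move: hs hi; rewrite -/iso sigmaE size_cat size_nseq; lia.
    rewrite /lab sigmaE nth_cat size_nseq (ltnNge i) hs /=.
    have := mem_nth 0 hi'; rewrite mem_sort => /mapP [x]; rewrite mem_enum inE => xi ->.
    by split; [apply: Lniso | apply: Lsq].
  + by rewrite -/iso sigmaE drop_size_cat ?size_nseq // sort_sorted //; apply: leq_total.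
  + move=> T1.
    have isoT : iso = setT.
      apply/setP=> x; rewrite !inE; apply/forallP=> y.
      have := card_le1_eqP (A := T); rewrite T1 => /(_ isT) /= h.
      by rewrite (h y x) ?eirr.
    by rewrite sigmaE isoT setCT enum_set0 cardsT T1.
- have lam0 : 0 < lambda sigma.
    rewrite /lambda; elim/big_rec: _ => // a r ha hr.
    by rewrite lcmn_gt0 hr andbT ltnW.
  have sec : [set:: map (fun p => [set x | p %| lab sigma (f x)]) (primes (lambda sigma))] = S'.
    apply/setP=> X; rewrite inE; apply/mapP/idP.
    + move=> [p]; rewrite mem_primes => /andP[pp /andP[_ pl]] ->.
      have [a /andP[/mapP [x _ ->] _] pa] := dvd_biglcm_prime _ _ _ pp pl.
      have [C /andP[CS _] ->] := Ldvd _ _ pp pa.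
      have -> : [set y | P C %| lab sigma (f y)] = C by rewrite -{2}(setPC C CS); apply/setP=> y; rewrite !inE labf.
      exact: CS.
    + move=> XS; exists (P X); last first.
        rewrite -{1}(setPC X XS); apply/setP=> y; by rewrite !inE labf.
      move: (XS); rewrite inE => /andP[_ XS0].
      have [x xX] := set0Pn _ (Scl X XS0).1.
      rewrite mem_primes Pp lam0 /=; apply: dvdn_trans (dvdL X x XS xX) _.
      apply: dvd_biglcm; first by apply/mapP; exists x.
      exact: leq_trans (prime_gt1 (Pp X)) (dvdn_leq (Lgt0 x) (dvdL X x XS xX)).
  rewrite /S_sigma sec -/iso -/isoS; apply/setP=> X; rewrite !inE.
  case: (boolP (X \in isoS)) => //= /imsetP [v vi ->].
  have [C CS vC] := Scov v; by rewrite -(single v C vi CS vC).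
Qed.
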